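(* Let $\mathcal{B}=\{(b,m): m>1,\ b\in B_m\}$. Let $\cong$ be the equivalence relation on $\mathcal{B}$ generated by: (1) for $m>1$ and $a,b\in B_m$, $(b,m)\cong(aba^{-1},m)$; (2) for $m>1$ and any word $\prod_{k=1}^{\ell}\sigma_{i_k}^{\epsilon_k}$ with $1\le i_k\le m-1$, $\epsilon_k\in\{1,-1\}$, $\left(\prod_{k=1}^{\ell}\sigma_{i_k}^{\epsilon_k},m\right)\cong\left(\sigma_1\prod_{k=1}^{\ell}\sigma_{i_k+1}^{\epsilon_k},m+1\right)$; (3) for such words, $\left(\prod_{k=1}^{\ell}\sigma_{i_k}^{\epsilon_k},m\right)\cong\left(\sigma_1^{-1}\prod_{k=1}^{\ell}\sigma_{i_k+1}^{\epsilon_k},m+1\right)$. Then $\cong$ coincides with the Markov equivalence $\sim$ on $\mathcal{B}$.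
   Context: For $n\ge 2$, $B_n$ is the braid group with generators $\sigma_1,\dots,\sigma_{n-1}$ and relations $\sigma_i\sigma_j=\sigma_j\sigma_i$ for $|i-j|\ge 2$ and $\sigma_i\sigma_{i+1}\sigma_i=\sigma_{i+1}\sigma_i\sigma_{i+1}$. For $m<n$, $B_m$ is identified with its image in $B_n$ under the homomorphism sending $\sigma_i\mapsto\sigma_i$. The Markov equivalence $\sim$ on $\mathcal{B}$ is the equivalence relation generated by: $(b,m)\sim(aba^{-1},m)$ for $a,b\in B_m$; $(b,m)\sim(\sigma_m b,m+1)$ for $b\in B_m$; $(b,m)\sim(\sigma_m^{-1}b,m+1)$ for $b\in B_m$. *)

(* Defs.v *)
(* Braid groups B_n given by their standard presentation:
   elements of B_n are braid words in sigma_1^{+-1},...,sigma_{n-1}^{+-1}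
   modulo the congruence generated by free cancellation and the braid
   relations. A pair (b,m) in \mathcal{B} is represented by (w,m) with w a
   word in the generators of B_m; equality in B_m is [braid_eq m]. *)
From Stdlib Require Import List Arith Relations.
Import ListNotations.

(* a letter (i, true) is sigma_i, (i, false) is sigma_i^{-1} *)
Definition letter : Type := (nat * bool)%type.
Definition word : Type := list letter.

Definition gen_ok (n : nat) (x : letter) : Prop := 1 <= fst x /\ fst x < n.
Definition word_ok (n : nat) (w : word) : Prop := Forall (gen_ok n) w.

Definition linv (x : letter) : letter := (fst x, negb (snd x)).
Definition winv (w : word) : word := rev (map linv w).

Inductive braid_step (n : nat) : word -> word -> Prop :=
| bs_cancel : forall (u v : word) (x : letter),
    word_ok n u -> word_ok n v -> gen_ok n x ->
    braid_step n (u ++ x :: linv x :: v) (u ++ v)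
| bs_comm : forall (u v : word) (i j : nat),
    word_ok n u -> word_ok n v -> 1 <= i -> i < n -> 1 <= j -> j < n ->
    (i + 2 <= j \/ j + 2 <= i) ->
    braid_step n (u ++ (i, true) :: (j, true) :: v)
                 (u ++ (j, true) :: (i, true) :: v)
| bs_braid : forall (u v : word) (i : nat),
    word_ok n u -> word_ok n v -> 1 <= i -> i + 1 < n ->
    braid_step n (u ++ (i, true) :: (i + 1, true) :: (i, true) :: v)
                 (u ++ (i + 1, true) :: (i, true) :: (i + 1, true) :: v).

Definition braid_eq (n : nat) : relation word :=
  clos_refl_sym_trans word (braid_step n).

Definition BB (p : word * nat) : Prop := 1 < snd p /\ word_ok (snd p) (fst p).

Definition wshift (w : word) : word := map (fun x => (S (fst x), snd x)) w.

Inductive markov_step : word * nat -> word * nat -> Prop :=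
| ms_eq : forall m w w', 1 < m -> word_ok m w -> word_ok m w' ->
    braid_eq m w w' -> markov_step (w, m) (w', m)
| ms_conj : forall m a b, 1 < m -> word_ok m a -> word_ok m b ->
    markov_step (b, m) (a ++ b ++ winv a, m)
| ms_stab_pos : forall m b, 1 < m -> word_ok m b ->
    markov_step (b, m) ((m, true) :: b, m + 1)
| ms_stab_neg : forall m b, 1 < m -> word_ok m b ->
    markov_step (b, m) ((m, false) :: b, m + 1).

Definition markov_equiv : relation (word * nat) :=
  clos_refl_sym_trans _ markov_step.

Inductive cong_step : word * nat -> word * nat -> Prop :=
| cs_eq : forall m w w', 1 < m -> word_ok m w -> word_ok m w' ->
    braid_eq m w w' -> cong_step (w, m) (w', m)
| cs_conj : forall m a b, 1 < m -> word_ok m a -> word_ok m b ->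
    cong_step (b, m) (a ++ b ++ winv a, m)
| cs_stab_pos : forall m w, 1 < m -> word_ok m w ->
    cong_step (w, m) ((1, true) :: wshift w, m + 1)
| cs_stab_neg : forall m w, 1 < m -> word_ok m w ->
    cong_step (w, m) ((1, false) :: wshift w, m + 1).

Definition cong_equiv : relation (word * nat) :=
  clos_refl_sym_trans _ cong_step.

(* Main.v *)
Require Import Defs.
From Stdlib Require Import List Arith Relations Lia.
Import ListNotations.

Fixpoint cw (k : nat) : word :=
  match k with 0 => [] | S k' => (S k', true) :: cw k' end.

Lemma wok_app n u v : word_ok n u -> word_ok n v -> word_ok n (u ++ v).
Proof. intros; apply Forall_app; auto. Qed.
Lemma wok_cons n x u : gen_ok n x -> word_ok n u -> word_ok n (x :: u).
Proof. intros; constructor; auto. Qed.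
Lemma wok_mono n n' w : n <= n' -> word_ok n w -> word_ok n' w.
Proof. intros Hn H; eapply Forall_impl; [|exact H]. intros [a b] [H1 H2]; split; simpl in *; lia. Qed.
Lemma wok_winv n w : word_ok n w -> word_ok n (winv w).
Proof. intros H; unfold winv; apply Forall_rev, Forall_map.
  eapply Forall_impl; [|exact H]. intros [a b] [H1 H2]; split; simpl in *; lia. Qed.
Lemma wok_shift n w : word_ok n w -> word_ok (S n) (wshift w).
Proof. intros H; unfold wshift; apply Forall_map.
  eapply Forall_impl; [|exact H]. intros [a b] [H1 H2]; split; simpl in *; lia. Qed.
Lemma wok_cw n k : k < n -> word_ok n (cw k).
Proof. induction k; intros; simpl; constructor; try split; simpl; try lia; apply IHk; lia. Qed.

Lemma winv_app u v : winv (u ++ v) = winv v ++ winv u.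
Proof. unfold winv; rewrite map_app, rev_app_distr; reflexivity. Qed.
Lemma winv_cons x w : winv (x :: w) = winv w ++ [linv x].
Proof. reflexivity. Qed.
Lemma winv_winv w : winv (winv w) = w.
Proof. unfold winv; rewrite map_rev, rev_involutive, map_map.
  induction w as [|[a b] w IH]; simpl; auto. unfold linv at 1 2; simpl. rewrite Bool.negb_involutive, IH; auto. Qed.

Lemma beq_refl n u : braid_eq n u u. Proof. apply rst_refl. Qed.
Lemma beq_sym n u v : braid_eq n u v -> braid_eq n v u. Proof. apply rst_sym. Qed.
Lemma beq_trans n u v w : braid_eq n u v -> braid_eq n v w -> braid_eq n u w.
Proof. apply rst_trans. Qed.
Lemma beq_eq n u v : u = v -> braid_eq n u v. Proof. intros ->; apply beq_refl. Qed.

Lemma bstep_l n p u v : word_ok n p -> braid_step n u v -> braid_step n (p ++ u) (p ++ v).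
Proof. intros Hp H; destruct H; rewrite !app_assoc; constructor; auto using wok_app. Qed.
Lemma bstep_r n p u v : word_ok n p -> braid_step n u v -> braid_step n (u ++ p) (v ++ p).
Proof. intros Hp H; destruct H; rewrite <- !app_assoc; simpl; constructor; auto using wok_app. Qed.
Lemma beq_l n p u v : word_ok n p -> braid_eq n u v -> braid_eq n (p ++ u) (p ++ v).
Proof. intros Hp H; induction H.
  - apply rst_step, bstep_l; auto.
  - apply beq_refl.
  - apply beq_sym; auto.
  - eapply beq_trans; eauto. Qed.
Lemma beq_r n p u v : word_ok n p -> braid_eq n u v -> braid_eq n (u ++ p) (v ++ p).
Proof. intros Hp H; induction H.
  - apply rst_step, bstep_r; auto.
  - apply beq_refl.
  - apply beq_sym; auto.
  - eapply beq_trans; eauto. Qed.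
Lemma beq_cons n x u v : gen_ok n x -> braid_eq n u v -> braid_eq n (x :: u) (x :: v).
Proof. intros; apply (beq_l n [x]); auto. constructor; auto. Qed.

Lemma beq_cancel n x v : gen_ok n x -> word_ok n v -> braid_eq n (x :: linv x :: v) v.
Proof. intros; apply rst_step. apply (bs_cancel n [] v x); auto. constructor. Qed.
Lemma linv_linv x : linv (linv x) = x.
Proof. destruct x; unfold linv; simpl; rewrite Bool.negb_involutive; auto. Qed.
Lemma beq_cancel' n x v : gen_ok n x -> word_ok n v -> braid_eq n (linv x :: x :: v) v.
Proof. intros. rewrite <- (linv_linv x) at 2. apply beq_cancel; auto. Qed.

Lemma gen_linv n x : gen_ok n x -> gen_ok n (linv x).
Proof. destruct x; unfold gen_ok, linv; simpl; auto. Qed.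

Lemma beq_wcancel n w v : word_ok n w -> word_ok n v -> braid_eq n (w ++ winv w ++ v) v.
Proof. revert v; induction w as [|a w IH]; intros v Hw Hv; simpl. apply beq_refl.
  inversion Hw; subst. rewrite winv_cons, <- app_assoc. simpl.
  eapply beq_trans. apply beq_cons; auto. apply (IH (linv a :: v)); auto; constructor; auto using gen_linv.
  apply beq_cancel; auto. Qed.
Lemma beq_wcancel' n w v : word_ok n w -> word_ok n v -> braid_eq n (winv w ++ w ++ v) v.
Proof. intros. rewrite <- (winv_winv w) at 2. apply beq_wcancel; auto using wok_winv. Qed.

Ltac assocs := repeat rewrite <- app_assoc; simpl; repeat rewrite <- app_assoc; simpl; reflexivity.




Lemma beq_letter_inv n x y u : gen_ok n x -> gen_ok n y -> word_ok n u ->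
  braid_eq n (x :: u) (u ++ [y]) -> braid_eq n (linv x :: u) (u ++ [linv y]).
Proof. intros Hx Hy Hu H.
  assert (E1 : braid_eq n u (u ++ [y; linv y])).
  { rewrite <- (app_nil_r u) at 1. apply beq_l; auto. apply beq_sym, beq_cancel; auto. constructor. }
  eapply beq_trans. apply beq_cons. apply gen_linv; auto. exact E1.
  eapply beq_trans. apply beq_cons. apply gen_linv; auto.
  eapply beq_trans. apply beq_eq. instantiate (1 := (u ++ [y]) ++ [linv y]). assocs.
  apply beq_r. constructor; auto using gen_linv. apply beq_sym, H.
  simpl. apply beq_cancel'; auto. apply wok_app; auto. constructor; auto using gen_linv.
Qed.

Lemma beq_pass n u f w : word_ok n u -> word_ok n w -> word_ok n (map f w) ->
  (forall x, In x w -> braid_eq n (x :: u) (u ++ [f x])) ->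
  braid_eq n (w ++ u) (u ++ map f w).
Proof. induction w as [|a w IH]; intros Hu Hw Hm H; simpl.
  rewrite app_nil_r; apply beq_refl.
  inversion Hm; subst. inversion Hw; subst.
  eapply beq_trans. apply beq_cons; auto. apply IH; auto. intros; apply H; simpl; auto.
  eapply beq_trans. apply beq_eq. instantiate (1 := (a :: u) ++ map f w). reflexivity.
  eapply beq_trans. apply beq_r; auto. apply H; simpl; auto.
  apply beq_eq; assocs.
Qed.

Lemma gok n i b : 1 <= i -> i < n -> gen_ok n (i, b).
Proof. split; simpl; lia. Qed.

Lemma beq_comm n i j v : 1 <= i -> i < n -> 1 <= j -> j < n -> (i + 2 <= j \/ j + 2 <= i) ->
  word_ok n v -> braid_eq n ((i,true) :: (j,true) :: v) ((j,true) :: (i,true) :: v).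
Proof. intros; apply rst_step; apply (bs_comm n [] v i j); auto. constructor. Qed.

Lemma cw_comm n k j : k + 2 <= j -> j < n ->
  braid_eq n (cw k ++ [(j,true)]) ((j,true) :: cw k).
Proof. induction k; intros; simpl. apply beq_refl.
  eapply beq_trans. apply beq_cons. apply gok; lia. apply IHk; lia.
  apply beq_comm; try lia. apply wok_cw; lia. Qed.

Lemma cw_pass n k i : k < n -> 1 <= i -> i < k ->
  braid_eq n ((i,true) :: cw k) (cw k ++ [(S i, true)]).
Proof. induction k; intros Hk Hi Hik. lia.
  simpl. destruct (Nat.eq_dec i k) as [->|Hne].
  - destruct k as [|k]. lia. simpl.
    assert (St : braid_step n ([] ++ (S k, true) :: (S k + 1, true) :: (S k, true) :: cw k)
       ([] ++ (S k + 1, true) :: (S k, true) :: (S k + 1, true) :: cw k)).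
    { apply bs_braid; try lia; try constructor. apply wok_cw; lia. }
    replace (S k + 1) with (S (S k)) in St by lia. simpl in St.
    eapply beq_trans. apply rst_step, St.
    apply beq_cons. apply gok; lia. apply beq_cons. apply gok; lia.
    apply beq_sym, cw_comm; lia.
  - eapply beq_trans. apply beq_comm; try lia. apply wok_cw; lia.
    apply beq_cons. apply gok; lia. apply IHk; lia.
Qed.

Lemma cw_sq n m j : m < n -> S j <= m ->
  braid_eq n (cw m ++ cw (S j)) (cw j ++ cw m ++ [(1,true)]).
Proof. induction j; intros Hm Hj. simpl. apply beq_refl.
  eapply beq_trans. apply beq_eq. instantiate (1 := (cw m ++ [(S (S j), true)]) ++ cw (S j)). assocs.
  eapply beq_trans. apply beq_r. apply wok_cw; lia. apply beq_sym, cw_pass; lia.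
  simpl. apply beq_cons. apply gok; lia. apply IHj; lia.
Qed.

Definition shl (x : letter) : letter := (S (fst x), snd x).

Lemma key_beq k w e : 1 <= k -> word_ok (S k) w ->
  braid_eq (S k + 1) ((cw k ++ cw (S k)) ++ ((1,e) :: wshift w) ++ winv (cw k ++ cw (S k)))
                    ((S k, e) :: cw k ++ w ++ winv (cw k)).
Proof. intros Hk Hw. set (n := S k + 1).
  assert (Hh : word_ok n (cw k)) by (apply wok_cw; lia).
  assert (Hc : word_ok n (cw (S k))) by (apply wok_cw; lia).
  assert (Hw' : word_ok n w) by (apply (wok_mono (S k)); auto; lia).
  assert (Hs : word_ok n (wshift w)) by (apply (wok_mono (S (S k))); auto using wok_shift; lia).
  assert (Hg : word_ok n (cw k ++ cw (S k))) by (apply wok_app; auto).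
  assert (A : braid_eq n ((S k, e) :: cw k ++ cw (S k)) ((cw k ++ cw (S k)) ++ [(1,e)])).
  { assert (A0 : braid_eq n ((S k, true) :: cw k ++ cw (S k)) ((cw k ++ cw (S k)) ++ [(1,true)])).
    { eapply beq_trans. apply beq_eq. instantiate (1 := cw (S k) ++ cw (S k)). reflexivity.
      eapply beq_trans. apply cw_sq; lia. apply beq_eq; assocs. }
    destruct e; auto.
    apply (beq_letter_inv n (S k, true) (1, true)); auto; apply gok; lia. }
  assert (B : braid_eq n (w ++ cw (S k)) (cw (S k) ++ wshift w)).
  { apply beq_pass; auto. intros [i b] Hin.
    assert (Gi : gen_ok (S k) (i, b)) by (eapply Forall_forall; eauto). destruct Gi as [G1 G2]; simpl in *.
    destruct b. apply (cw_pass n (S k) i); unfold n; lia.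
    apply (beq_letter_inv n (i, true) (S i, true)); auto; try apply gok; try (unfold n; lia).
    apply (cw_pass n (S k) i); unfold n; lia. }
  eapply beq_trans. apply beq_eq. instantiate (1 := ((cw k ++ cw (S k)) ++ [(1,e)]) ++ wshift w ++ winv (cw k ++ cw (S k))). assocs.
  eapply beq_trans. apply beq_r. apply wok_app; auto. apply wok_winv; auto. apply beq_sym, A.
  eapply beq_trans. apply beq_eq. instantiate (1 := (S k, e) :: cw k ++ (cw (S k) ++ wshift w) ++ winv (cw k ++ cw (S k))). assocs.
  eapply beq_trans. apply beq_cons. apply gok; lia. apply beq_l; auto. apply beq_r. apply wok_winv; auto.
  apply beq_sym, B.
  rewrite winv_app.
  eapply beq_trans. apply beq_eq. instantiate (1 := ((S k, e) :: cw k ++ w) ++ (cw (S k) ++ winv (cw (S k)) ++ winv (cw k))). assocs.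
  eapply beq_trans. apply beq_l. apply wok_cons. apply gok; lia. apply wok_app; auto.
  apply beq_wcancel; auto. apply wok_winv; auto.
  apply beq_eq; assocs.
Qed.

Section Gen.
Variable R : relation (word * nat).
Hypothesis HReq : forall m w w', 1 < m -> word_ok m w -> word_ok m w' ->
  braid_eq m w w' -> R (w, m) (w', m).
Hypothesis HRconj : forall m a b, 1 < m -> word_ok m a -> word_ok m b ->
  R (b, m) (a ++ b ++ winv a, m).

Lemma KL_gen k w e : 1 <= k -> word_ok (S k) w ->
  clos_refl_sym_trans _ R ((1, e) :: wshift w, S k + 1)
     ((S k, e) :: cw k ++ w ++ winv (cw k), S k + 1).
Proof. intros Hk Hw.
  assert (Hh : word_ok (S k + 1) (cw k)) by (apply wok_cw; lia).
  assert (Hc : word_ok (S k + 1) (cw (S k))) by (apply wok_cw; lia).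
  assert (Hw' : word_ok (S k + 1) w) by (apply (wok_mono (S k)); auto; lia).
  assert (Hs : word_ok (S k + 1) (wshift w)) by (apply (wok_mono (S (S k))); auto using wok_shift; lia).
  eapply rst_trans. apply rst_step. apply (HRconj (S k + 1) (cw k ++ cw (S k))); try lia.
  apply wok_app; auto. apply wok_cons; auto. apply gok; lia.
  apply rst_step. apply HReq; try lia.
  repeat apply wok_app; auto. apply wok_cons; auto. apply gok; lia. apply wok_winv, wok_app; auto.
  apply wok_cons. apply gok; lia. repeat apply wok_app; auto. apply wok_winv; auto.
  apply key_beq; auto.
Qed.
End Gen.

Lemma cong_markov p q : cong_equiv p q -> markov_equiv p q.
Proof. intros H; induction H as [p q H| | |].
  - destruct H.
    + apply rst_step, ms_eq; auto.
    + apply rst_step, ms_conj; auto.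
    + destruct m as [|k]. lia.
      assert (Hh : word_ok (S k) (cw k)) by (apply wok_cw; lia).
      eapply rst_trans. apply rst_step, (ms_conj (S k) (cw k) w); auto.
      eapply rst_trans. apply rst_step, ms_stab_pos; auto.
      repeat apply wok_app; auto using wok_winv.
      apply rst_sym, KL_gen; auto. intros; apply ms_eq; auto.
      intros; apply ms_conj; auto. lia.
    + destruct m as [|k]. lia.
      assert (Hh : word_ok (S k) (cw k)) by (apply wok_cw; lia).
      eapply rst_trans. apply rst_step, (ms_conj (S k) (cw k) w); auto.
      eapply rst_trans. apply rst_step, ms_stab_neg; auto.
      repeat apply wok_app; auto using wok_winv.
      apply rst_sym, KL_gen; auto. intros; apply ms_eq; auto.
      intros; apply ms_conj; auto. lia.
  - apply rst_refl.
  - apply rst_sym; auto.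
  - eapply rst_trans; eauto.
Qed.

Lemma undo_beq k b : word_ok (S k) b -> forall e,
  braid_eq (S k + 1) ((S k, e) :: cw k ++ (winv (cw k) ++ b ++ winv (winv (cw k))) ++ winv (cw k))
    ((S k, e) :: b).
Proof. intros Hb e. rewrite winv_winv.
  assert (Hh : word_ok (S k + 1) (cw k)) by (apply wok_cw; lia).
  assert (Hb' : word_ok (S k + 1) b) by (apply (wok_mono (S k)); auto; lia).
  apply beq_cons. apply gok; lia.
  eapply beq_trans. apply beq_eq. instantiate (1 := cw k ++ winv (cw k) ++ (b ++ cw k ++ winv (cw k))). assocs.
  eapply beq_trans. apply beq_wcancel; auto. repeat apply wok_app; auto using wok_winv.
  rewrite <- (app_nil_r b) at 2. apply beq_l; auto.
  rewrite <- (app_nil_r (winv (cw k))). apply beq_wcancel; auto. constructor.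
Qed.

Lemma markov_cong p q : markov_equiv p q -> cong_equiv p q.
Proof. intros H; induction H as [p q H| | |].
  - destruct H.
    + apply rst_step, cs_eq; auto.
    + apply rst_step, cs_conj; auto.
    + destruct m as [|k]. lia.
      assert (Hh : word_ok (S k) (winv (cw k))) by (apply wok_winv, wok_cw; lia).
      assert (Hh' : word_ok (S k + 1) (cw k)) by (apply wok_cw; lia).
      assert (Hb' : word_ok (S k + 1) b) by (apply (wok_mono (S k)); auto; lia).
      assert (Hw : word_ok (S k) (winv (cw k) ++ b ++ winv (winv (cw k)))) by
        (repeat apply wok_app; auto using wok_winv).
      assert (Hw' : word_ok (S k + 1) (winv (cw k) ++ b ++ winv (winv (cw k)))) by
        (apply (wok_mono (S k)); auto; lia).
      eapply rst_trans. apply rst_step, (cs_conj (S k) (winv (cw k)) b); auto.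
      eapply rst_trans. apply rst_step, cs_stab_pos; auto.
      eapply rst_trans. apply KL_gen; auto. intros; apply cs_eq; auto.
      intros; apply cs_conj; auto. lia.
      apply rst_step, cs_eq; try lia.
      apply wok_cons. apply gok; lia. repeat apply wok_app; auto using wok_winv.
      apply wok_cons; auto. apply gok; lia.
      apply undo_beq; auto.
    + destruct m as [|k]. lia.
      assert (Hh : word_ok (S k) (winv (cw k))) by (apply wok_winv, wok_cw; lia).
      assert (Hh' : word_ok (S k + 1) (cw k)) by (apply wok_cw; lia).
      assert (Hb' : word_ok (S k + 1) b) by (apply (wok_mono (S k)); auto; lia).
      assert (Hw : word_ok (S k) (winv (cw k) ++ b ++ winv (winv (cw k)))) by
        (repeat apply wok_app; auto using wok_winv).
      assert (Hw' : word_ok (S k + 1) (winv (cw k) ++ b ++ winv (winv (cw k)))) by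
        (apply (wok_mono (S k)); auto; lia).
      eapply rst_trans. apply rst_step, (cs_conj (S k) (winv (cw k)) b); auto.
      eapply rst_trans. apply rst_step, cs_stab_neg; auto.
      eapply rst_trans. apply KL_gen; auto. intros; apply cs_eq; auto.
      intros; apply cs_conj; auto. lia.
      apply rst_step, cs_eq; try lia.
      apply wok_cons. apply gok; lia. repeat apply wok_app; auto using wok_winv.
      apply wok_cons; auto. apply gok; lia.
      apply undo_beq; auto.
  - apply rst_refl.
  - apply rst_sym; auto.
  - eapply rst_trans; eauto.
Qed.

Theorem theorem4p4 : forall p q : word * nat, BB p -> BB q ->
  (cong_equiv p q <-> markov_equiv p q).
Proof. intros p q _ _; split; [apply cong_markov | apply markov_cong]. Qed.
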